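(* Let $G$ be a finite group with centre $Z(G)$. Then \[ \frac{1}{|G|^2}\sum_{\chi, \chi' \in \mathrm{Irr}(G)} d_\chi d_{\chi'}\left|\sum_{x \in Z(G)}\chi(x)\overline{\chi'(x)}\right| = 1. \]
   Context: $\mathrm{Irr}(G)$ is the set of irreducible complex characters of $G$ and $d_\chi = \chi(e)$ is the degree of $\chi$. *)

(* Defs.v *)
From mathcomp Require Export all_boot all_order all_algebra all_fingroup all_solvable all_field all_character.

(* Main.v *)
Require Import Defs.
From mathcomp Require Import ring.
Import Order.TTheory GRing.Theory Num.Theory.
Local Open Scope group_scope.
Local Open Scope ring_scope.


Lemma Zsub (gT : finGroupType) (G : {group gT}) (i : Iirr G) :
  'Z(G) \subset ('Z('chi_i))%CF.
Proof. by rewrite -cap_cfcenter_irr; apply: (bigcap_inf i). Qed.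

Lemma mu_ex (gT : finGroupType) (G : {group gT}) (i : Iirr G) :
  exists2 mu : 'CF('Z(G)), mu \in irr 'Z(G) &
    {in 'Z(G), forall x, ('chi_i x = 'chi_i 1%g * mu x)%R}.
Proof.
have [l Ll Dl] := cfcenter_Res 'chi_i.
exists ('Res['Z(G)] l); first by apply: lin_char_irr; apply: cfRes_lin_char.
move=> x Zx.
have Zx' : x \in ('Z('chi_i))%CF := subsetP (@Zsub _ G i) x Zx.
rewrite cfResE ?Zsub //.
rewrite -(cfResE 'chi_i (cfcenter_sub 'chi_i) Zx') Dl cfunE //.
Qed.

Lemma S_ge0 (gT : finGroupType) (G : {group gT}) (i j : Iirr G) :
  (0 <= \sum_(x in 'Z(G)) 'chi_i x * ('chi_j x)^*)%R.
Proof.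
have [mi /irrP[a ->] Di] := mu_ex _ G i.
have [mj /irrP[b ->] Dj] := mu_ex _ G j.
rewrite (eq_bigr (fun x => ('chi_i 1%g * ('chi_j 1%g)^*) *
     ('chi_a x * ('chi_b x)^*))); last first.
  move=> x Zx; rewrite Di // Dj // rmorphM /=; ring.
rewrite -mulr_sumr.
have -> : \sum_(x in 'Z(G)) 'chi_a x * ('chi_b x)^* =
          #|'Z(G)|%:R * '['chi_a, 'chi_b].
  rewrite cfdotE mulrA mulfV ?mul1r //.
  by rewrite pnatr_eq0 -lt0n cardG_gt0.
rewrite cfdot_irr.
apply: mulr_ge0; first apply: mulr_ge0.
- exact: ltW (irr1_gt0 i).
- by rewrite conj_natr ?Cnat_irr1 // ltW ?irr1_gt0.
apply: mulr_ge0; first exact: ler0n.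
exact: ler0n.
Qed.

Local Open Scope ring_scope.
Local Open Scope group_scope.

Theorem lemma4p3 (gT : finGroupType) (G : {group gT}) :
  ((#|G|%:R ^+ 2)^-1 *
   \sum_(i : Iirr G) \sum_(j : Iirr G)
     'chi_i 1%g * 'chi_j 1%g *
     `| \sum_(x in 'Z(G)) 'chi_i x * ('chi_j x)^* | = 1 :> algC)%R.
Proof.
have H1 : \sum_(i : Iirr G) \sum_(j : Iirr G)
     'chi_i 1%g * 'chi_j 1%g *
     `| \sum_(x in 'Z(G)) 'chi_i x * ('chi_j x)^* |
   = (\sum_(x in 'Z(G)) cfReg G x * (cfReg G x)^*)%R.
  under eq_bigr => i _ do under eq_bigr => j _ do rewrite ger0_norm ?S_ge0 //.
  rewrite cfReg_sum.
  under [RHS]eq_bigr => x _ do rewrite sum_cfunE rmorph_sum /= big_distrl /=.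
  under [RHS]eq_bigr => x _ do under eq_bigr => i _ do rewrite big_distrr /=.
  rewrite [RHS]exchange_big /=; apply: eq_bigr => i _.
  rewrite [RHS]exchange_big /=; apply: eq_bigr => j _.
  rewrite mulr_sumr; apply: eq_bigr => x _.
  rewrite !cfunE rmorphM /= (conj_natr (Cnat_irr1 j)); ring.
rewrite H1 (bigD1 1%g) ?group1 //= big1 ?addr0; last first.
  by move=> x /andP[_ /negbTE nx1]; rewrite cfRegE nx1 mulr0n mul0r.
rewrite cfRegE eqxx mulr1n conj_natr ?natr_nat // -expr2 mulVf //.
by rewrite expf_neq0 // pnatr_eq0 -lt0n cardG_gt0.
Qed.
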